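(* Let $R$ be a commutative ring with identity satisfying Property $D$. Then the trivial extension $R[x]\propto R[[x]]$ satisfies Property $D$.
   Context: $R[[x]]$ is regarded as an $R[x]$-module via multiplication. For a ring $A$ and an $A$-module $M$, $A\propto M$ is $A\times M$ with coordinatewise addition and $(a,m)(b,n)=(ab,an+bm)$. A ring $A$ satisfies Property $D$ if $A\setminus\mathfrak{N}(A)=\mathrm{reg}(A)$, where $\mathfrak{N}(A)$ is the nilradical and $\mathrm{reg}(A)$ the set of regular elements. *)

(* Defs.v *)
From mathcomp Require Import all_boot all_algebra.
Set Implicit Arguments. Unset Strict Implicit. Unset Printing Implicit Defensive.
Import GRing.Theory.
Local Open Scope ring_scope.

Definition nilpotent_in {T : Type} (mul : T -> T -> T) (one zero : T) (a : T) :=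
  exists n : nat, iter n (mul a) one = zero.
Definition regular_in {T : Type} (mul : T -> T -> T) (zero : T) (a : T) :=
  forall b : T, mul a b = zero -> b = zero.
Definition PropertyD_in {T : Type} (mul : T -> T -> T) (one zero : T) :=
  forall a : T, ~ nilpotent_in mul one zero a <-> regular_in mul zero a.

Definition PropertyD (R : comNzRingType) := PropertyD_in (@GRing.mul R) 1 0.

Definition pseries (R : Type) := nat -> R.
Definition ps0 (R : comNzRingType) : pseries R := fun _ => 0.
Definition psadd (R : comNzRingType) (f g : pseries R) : pseries R := fun n => f n + g n.
Definition polyps_mul (R : comNzRingType) (p : {poly R}) (f : pseries R) : pseries R :=
  fun n => \sum_(i < n.+1) p`_i * f (n - i)%N.

Definition triv_ext_mul {A M : Type} (Amul : A -> A -> A) (Madd : M -> M -> M)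
  (act : A -> M -> M) (u v : A * M) : A * M :=
  (Amul u.1 v.1, Madd (act u.1 v.2) (act v.1 u.2)).

Definition PolyPS (R : comNzRingType) := ({poly R} * pseries R)%type.
Definition PolyPS_mul (R : comNzRingType) : PolyPS R -> PolyPS R -> PolyPS R :=
  triv_ext_mul (@GRing.mul {poly R}) (@psadd R) (@polyps_mul R).
Definition PolyPS_one (R : comNzRingType) : PolyPS R := (1, ps0 R).
Definition PolyPS_zero (R : comNzRingType) : PolyPS R := (0, ps0 R).

(* Main.v *)
Require Import Defs.
From mathcomp Require Import all_boot all_algebra.
From Stdlib Require Import Classical FunctionalExtensionality.
Set Implicit Arguments. Unset Strict Implicit. Unset Printing Implicit Defensive.
Import GRing.Theory.
Local Open Scope ring_scope.

Section Aux.
Variable R : comNzRingType.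
Local Notation act := (@polyps_mul R).

Definition Tr (m : nat) (f : pseries R) : {poly R} := \poly_(i < m.+1) f i.

Lemma actE p f n m : (n <= m)%N -> act p f n = (p * Tr m f)`_n.
Proof.
move=> hnm; rewrite /polyps_mul coefM; apply: eq_bigr => i _.
rewrite coef_poly ltnS (leq_trans (leq_subr _ _) hnm) //.
Qed.

Lemma coefM_ext (p A B : {poly R}) n :
  (forall j, (j <= n)%N -> A`_j = B`_j) -> (p * A)`_n = (p * B)`_n.
Proof.
move=> H; rewrite !coefM; apply: eq_bigr => i _; rewrite H // leq_subr //.
Qed.

Lemma act_mul p q f : act (p * q) f = act p (act q f).
Proof.
apply: functional_extensionality => n.
rewrite (actE _ _ (leqnn n)) [RHS](actE _ _ (leqnn n)) -mulrA.
apply: coefM_ext => j hj.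
by rewrite /Tr coef_poly ltnS hj (actE _ _ hj).
Qed.

Lemma act0p f : act 0 f = ps0 R.
Proof.
apply: functional_extensionality => n.
by rewrite /polyps_mul big1 // => i _; rewrite coef0 mul0r.
Qed.

Lemma actp0 p : act p (ps0 R) = ps0 R.
Proof.
apply: functional_extensionality => n.
by rewrite /polyps_mul big1 // => i _; rewrite /ps0 mulr0.
Qed.

Lemma psadd0 f : psadd f (ps0 R) = f.
Proof. by apply: functional_extensionality => n; rewrite /psadd /ps0 addr0. Qed.

Lemma act1 f : act 1 f = f.
Proof.
apply: functional_extensionality => n.
by rewrite (actE _ _ (leqnn n)) mul1r coef_poly ltnS leqnn.
Qed.

Lemma act_shift k (v : {poly R}) g n : act ('X^k * v) g (n + k)%N = act v g n.
Proof.
rewrite (actE _ _ (leqnn (n + k)%N)) -mulrA coefXnM ltnNge leq_addl /= addnK.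
by rewrite (actE _ _ (leq_addr k n)).
Qed.

Definition regR (r : R) := forall b : R, r * b = 0 -> b = 0.

Lemma reg0 (v : {poly R}) g : regR v`_0 -> act v g = ps0 R -> g = ps0 R.
Proof.
move=> hv H; apply: functional_extensionality => n.
elim/ltn_ind: n => n IH.
have := congr1 (fun h => h n) H; rewrite /polyps_mul /ps0 big_ord_recl subn0.
rewrite big1 ?addr0; first by apply: hv.
move=> i _; rewrite IH ?mulr0 //= /bump /=.
case: n IH i => [|n] IH [i hi] //=.
by rewrite add1n subSS ltnS leq_subr.
Qed.

Lemma regX k (v : {poly R}) g : regR v`_0 -> act ('X^k * v) g = ps0 R -> g = ps0 R.
Proof.
move=> hv H; apply: (reg0 hv); apply: functional_extensionality => n.
by rewrite -(act_shift k) H.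
Qed.

Lemma regRX r M : regR r -> regR (r ^+ M).
Proof.
move=> hr; elim: M => [|M IH] b; first by rewrite expr0 mul1r.
by rewrite exprS -mulrA => /hr /IH.
Qed.

Lemma coef0X (u : {poly R}) M : (u ^+ M)`_0 = u`_0 ^+ M.
Proof.
elim: M => [|M IH]; first by rewrite !expr0 coef1.
by rewrite !exprS coef0M IH.
Qed.

Lemma iterE (T : comNzRingType) (a : T) n : iter n (GRing.mul a) 1 = a ^+ n.
Proof. by elim: n => [|n IH]; rewrite ?expr0 //= IH exprS. Qed.

Lemma expr_big (T : comNzRingType) (x : T) m k : x ^+ m = 0 -> (m <= k)%N -> x ^+ k = 0.
Proof. by move=> hx hmk; rewrite -(subnKC hmk) exprD hx mul0r. Qed.

Lemma nilpD (T : comNzRingType) (x y : T) m n :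
  x ^+ m = 0 -> y ^+ n = 0 -> (x + y) ^+ (m + n) = 0.
Proof.
move=> hx hy; rewrite exprDn big1 // => [[i hi]] _ /=.
case: (leqP n i) => h.
  by rewrite (expr_big hy h) mulr0 mul0rn.
rewrite (@expr_big _ x m) ?mul0r ?mul0rn //.
by rewrite leq_subRL ?(leq_trans (ltnW h)) ?leq_addl // addnC leq_add2l ltnW.
Qed.

Definition nilp (T : comNzRingType) (x : T) := exists m, x ^+ m = 0.

Lemma nilp_poly (p : {poly R}) k :
  (forall i, (i < k)%N -> nilp p`_i) -> nilp (\poly_(i < k) p`_i).
Proof.
elim: k => [|k IH] H; first by exists 1%N; rewrite poly_def big_ord0 expr1.
rewrite poly_def big_ord_recr /= -poly_def.
have [m hm] := IH (fun i hi => H i (ltnW hi)).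
have [n hn] := H k (ltnSn k).
exists (m + n)%N; apply: nilpD hm _.
by rewrite exprZn hn scale0r.
Qed.

Lemma least (P : nat -> Prop) n : P n -> exists k, P k /\ forall i, (i < k)%N -> ~ P i.
Proof.
elim/ltn_ind: n => n IH Pn.
case: (classic (exists i, (i < n)%N /\ P i)) => [[i [hi Pi]]|H].
  exact: IH hi Pi.
by exists n; split => // i hi Pi; apply: H; exists i.
Qed.

End Aux.

Theorem mainTheorem15 (R : comNzRingType) :
  PropertyD R ->
  PropertyD_in (@PolyPS_mul R) (PolyPS_one R) (PolyPS_zero R).
Proof.
move=> HD [p f]; split.
- move=> Hn [q g].
  have pnil : ~ nilp p.
    case=> N hN; apply: Hn; exists (N + N)%N.
    pose z n := iter n (PolyPS_mul (p, f)) (PolyPS_one R).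
    have z1 n : (z n).1 = p ^+ n.
      by elim: n => [|n IH] //=; rewrite IH exprS.
    have z2 n : (z n.+1).2 = psadd (polyps_mul p (z n).2) (polyps_mul (p ^+ n) f).
      by rewrite -z1.
    have z3 m : (z (m + N)%N).2 = polyps_mul (p ^+ m) (z N).2.
      elim: m => [|m IH]; first by rewrite expr0 act1.
      rewrite addSn z2 IH -act_mul -exprS (expr_big hN (leq_addl m N)).
      by rewrite act0p psadd0.
    rewrite -/(z (N + N)%N) [z _]surjective_pairing z1 z3 hN act0p exprD hN mul0r.
    by [].
  have [k0 hk0] : exists k, ~ nilp p`_k.
    apply: NNPP => H; apply: pnil; rewrite -(coefK p); apply: nilp_poly => i _.
    by apply: NNPP => h; apply: H; exists i.
  have [k [hk hmin]] := @least (fun k => ~ nilp p`_k) k0 hk0.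
  have regk : regR p`_k.
    apply/HD => [[m hm]]; apply: hk; exists m; by rewrite -iterE.
  pose a := \poly_(i < k) p`_i.
  have [M hM] := @nilp_poly R p k (fun i hi => NNPP _ (hmin i hi)).
  pose u := \poly_(i < size p) p`_(i + k).
  have hw : p - a = 'X^k * u.
    apply/polyP => j; rewrite coefB coefXnM !coef_poly.
    case: ltnP => hj; first by rewrite subrr.
    rewrite subr0; case: ltnP => hs; first by rewrite subnK.
    by rewrite nth_default // (leq_trans hs (leq_subr _ _)).
  have hu0 : u`_0 = p`_k.
    rewrite coef_poly add0n; case: ltnP => // hs.
    by rewrite nth_default // (leq_trans hs (leq0n k)).
  have regp : forall g0, polyps_mul p g0 = ps0 R -> g0 = ps0 R.
    move=> g0 hg.
    move: (subrXX (p - a) (- a) M); rewrite exprNn hM mulr0 subr0 opprK subrK => e.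
    apply: (@regX _ (k * M)%N (u ^+ M)).
      by rewrite coef0X hu0; exact: regRX.
    by rewrite exprM -exprMn -hw e mulrC act_mul hg actp0.
  rewrite /PolyPS_mul /triv_ext_mul /PolyPS_zero /= => Heq.
  case: Heq => h1 h2.
  have hqs : (fun n => q`_n) = ps0 R.
    apply: regp; apply: functional_extensionality => n.
    rewrite (actE _ _ (leqnn n)).
    transitivity ((p * q)`_n); last by rewrite h1 coef0.
    by apply: coefM_ext => j hj; rewrite coef_poly ltnS hj.
  have hq : q = 0.
    by apply/polyP => n; rewrite coef0; exact: (congr1 (fun h => h n) hqs).
  rewrite hq act0p psadd0 in h2.
  by rewrite hq (regp _ h2).
- move=> Hreg [n]; elim: n => [|n IH].
    by case=> /eqP; rewrite oner_eq0.
  by rewrite iterS => /Hreg.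
Qed.
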